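(* Assume the setting in the context (Condition ASM), let $\widehat\beta$ be a LASSO solution, $\widehat T=\mathrm{support}(\widehat\beta)$, $\zeta:=\max_{1\leqslant j\leqslant p}|\widehat\beta_j-\beta_{0j}|$, and $\widehat m=|\widehat T\setminus T|$. Fix $c>1$, $\bar c=(c+1)/(c-1)$. (1) If $\min_{j\in T}|\beta_{0j}|>\zeta+t$ for some $t\geqslant\zeta$, then $T\subseteq\widehat T$ and moreover $T=\{j\in\{1,\dots,p\}:|\widehat\beta_j|>t\}$. (2) If $\lambda\geqslant c\,n\|S\|_\infty$, then $$\zeta\leqslant\Big(1+\frac1c\Big)\frac{\lambda\sqrt s}{n\,\kappa_{\bar c}\,\kappa(\widehat m)}+\frac{2c_s}{\kappa(\widehat m)}.$$ (3) If $\lambda\geqslant c\,n\|S\|_\infty$ and there is a constant $U>5\bar c$ such that $|\mathbb{E}_n[x_{ij}x_{ik}]|\leqslant 1/(Us)$ for all $1\leqslant j<k\leqslant p$, then $$\zeta\leqslant\frac{\lambda}{n}\cdot\frac{U+\bar c}{U-5\bar c}+\min\Big\{\frac{\sigma}{\sqrt n},c_s\Big\}+\frac{6\bar c}{U-5\bar c}\frac{c_s}{\sqrt s}+\frac{4\bar c}{U}\frac{n}{\lambda}\frac{c_s^2}{s}.$$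
   Context: Condition ASM: observations $(y_i,z_i)$, $i=1,\dots,n$, $z_i$ fixed, $y_i=f(z_i)+\varepsilon_i$ with $\varepsilon_i$ i.i.d. $N(0,\sigma^2)$. $f_i=f(z_i)$, $\mathbb{E}_n[a_i]=n^{-1}\sum_i a_i$, $x_i=P(z_i)\in\mathbb{R}^p$ (including a constant) normalized so $\mathbb{E}_n[x_{ij}^2]=1$. $\beta_0$ is any solution of $\min_\beta\mathbb{E}_n[(f_i-x_i'\beta)^2]+\sigma^2\|\beta\|_0/n$ ($\|\cdot\|_0$ = number of nonzeros); $s=\|\beta_0\|_0$, $T=\mathrm{support}(\beta_0)$, $r_i=f_i-x_i'\beta_0$, $c_s=\sqrt{\mathbb{E}_n[r_i^2]}\leqslant K\sigma\sqrt{s/n}$ for an absolute constant $K$. $\|\delta\|_{2,n}=\sqrt{\mathbb{E}_n[(x_i'\delta)^2]}$; $S=2\mathbb{E}_n[x_i\varepsilon_i]$; LASSO: $\widehat\beta\in\arg\min_\beta\mathbb{E}_n[(y_i-x_i'\beta)^2]+\frac\lambda n\|\beta\|_1$, $\lambda>0$. $\delta_A$ is $\delta$ with entries outside $A$ set to zero. Restricted eigenvalue: $\kappa_C=\min\{\sqrt s\|\delta\|_{2,n}/\|\delta_T\|_1:\|\delta_{T^c}\|_1\leqslant C\|\delta_T\|_1,\ \delta_T\neq0\}$. Minimal sparse eigenvalue: $\kappa(m)^2=\min\{\|\delta\|_{2,n}^2/\|\delta\|^2:\delta\neq0,\|\delta_{T^c}\|_0\leqslant m\}$. *)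

(* Defs.v *)
From HB Require Import structures.
From mathcomp Require Import all_boot all_order all_algebra.
From mathcomp Require Import classical_sets reals.
Set Implicit Arguments. Unset Strict Implicit. Unset Printing Implicit Defensive.
Import Order.TTheory GRing.Theory Num.Theory.
Local Open Scope ring_scope.
Local Open Scope classical_set_scope.

Section Defs.
Variables (R : realType) (n p : nat).

Definition En (a : 'I_n -> R) : R := (\sum_(i < n) a i) / n%:R.

Definition xdot (x : 'I_n -> 'I_p -> R) (i : 'I_n) (b : 'I_p -> R) : R :=
  \sum_(j < p) x i j * b j.

Definition supp (b : 'I_p -> R) : {set 'I_p} := [set j | b j != 0].
Definition l0 (b : 'I_p -> R) : nat := #|supp b|.
Definition l1 (b : 'I_p -> R) : R := \sum_(j < p) `|b j|.
Definition l2 (b : 'I_p -> R) : R := Num.sqrt (\sum_(j < p) b j ^+ 2).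
Definition linf (b : 'I_p -> R) : R := \big[Num.max/0]_(j < p) `|b j|.

Definition restr (A : {set 'I_p}) (d : 'I_p -> R) : 'I_p -> R :=
  fun j => if j \in A then d j else 0.

Definition norm2n (x : 'I_n -> 'I_p -> R) (d : 'I_p -> R) : R :=
  Num.sqrt (En (fun i => xdot x i d ^+ 2)).

Definition kappaC (x : 'I_n -> 'I_p -> R) (T : {set 'I_p}) (C : R) : R :=
  inf [set r : R | exists d : 'I_p -> R,
         [/\ l1 (restr (~: T) d) <= C * l1 (restr T d),
             (exists2 j, j \in T & d j != 0) &
             r = Num.sqrt (#|T|%:R) * norm2n x d / l1 (restr T d)]].

Definition kappa_sp (x : 'I_n -> 'I_p -> R) (T : {set 'I_p}) (m : nat) : R :=
  Num.sqrt (inf [set r : R | exists d : 'I_p -> R,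
         [/\ (exists j, d j != 0),
             (#|[set j in ~: T | d j != 0%R]| <= m)%N &
             r = norm2n x d ^+ 2 / l2 d ^+ 2]]).

End Defs.

(* Main.v *)
Require Import Defs.
From HB Require Import structures.
From mathcomp Require Import all_boot all_order all_algebra.
From mathcomp Require Import classical_sets reals.
From mathcomp Require Import ring lra.
Import Order.TTheory GRing.Theory Num.Theory.
Local Open Scope ring_scope.

Lemma En_ext (R : realType) (n : nat) (a b : 'I_n -> R) :
  (forall i, a i = b i) -> En a = En b.
Proof. by move=> h; rewrite /En; congr (_ / _); apply: eq_bigr => i _. Qed.

Lemma EnD (R : realType) (n : nat) (a b : 'I_n -> R) :
  En (fun i => a i + b i) = En a + En b.
Proof. by rewrite /En big_split /= mulrDl. Qed.

Lemma EnZ (R : realType) (n : nat) (k : R) (a : 'I_n -> R) :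
  En (fun i => k * a i) = k * En a.
Proof. by rewrite /En -mulr_sumr mulrA. Qed.

Lemma En_le (R : realType) (n : nat) (a b : 'I_n -> R) :
  (forall i, a i <= b i) -> En a <= En b.
Proof.
move=> h; rewrite /En; apply: ler_wpM2r; first by rewrite invr_ge0 ler0n.
by apply: ler_sum => i _.
Qed.

Lemma En_ge0 (R : realType) (n : nat) (a : 'I_n -> R) :
  (forall i, 0 <= a i) -> 0 <= En a.
Proof.
move=> h; rewrite /En; apply: mulr_ge0; last by rewrite invr_ge0 ler0n.
by apply: sumr_ge0 => i _.
Qed.

Lemma En_sum (R : realType) (n p : nat) (F : 'I_n -> 'I_p -> R) :
  En (fun i => \sum_(j < p) F i j) = \sum_(j < p) En (fun i => F i j).
Proof. by rewrite /En exchange_big /= mulr_suml. Qed.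

Lemma En_quad (R : realType) (n : nat) (w v : 'I_n -> R) (t : R) :
  En (fun i => (w i - t * v i) ^+ 2) =
  En (fun i => w i ^+ 2) - 2 * t * En (fun i => w i * v i)
   + t ^+ 2 * En (fun i => v i ^+ 2).
Proof.
rewrite (@En_ext _ _ _ (fun i => (w i ^+ 2 + (- (2 * t)) * (w i * v i))
    + t ^+ 2 * v i ^+ 2)); last by move=> i; ring.
by rewrite !EnD !EnZ; ring.
Qed.

Lemma xdotB (R : realType) (n p : nat) (x : 'I_n -> 'I_p -> R) i (b1 b2 : 'I_p -> R) :
  xdot x i (fun j => b1 j - b2 j) = xdot x i b1 - xdot x i b2.
Proof. by rewrite /xdot -sumrB; apply: eq_bigr => j _; rewrite mulrBr. Qed.

Definition upd (R : realType) (p : nat) (b : 'I_p -> R) (j : 'I_p) (t : R) :=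
  fun k => b k + (if k == j then t else 0).
Arguments upd {R p}.

Lemma xdot_upd (R : realType) (n p : nat) (x : 'I_n -> 'I_p -> R) i b j t :
  xdot x i (upd b j t) = xdot x i b + t * x i j.
Proof.
rewrite /xdot /upd.
rewrite (eq_bigr (fun k => x i k * b k + x i k * (if k == j then t else 0)));
  last by move=> k _; rewrite mulrDr.
rewrite big_split /=; congr (_ + _).
rewrite (bigD1 j) // eqxx big1 /=; first by rewrite addr0 mulrC.
by move=> k /= /negbTE ->; rewrite mulr0.
Qed.

Lemma l1_upd (R : realType) (p : nat) (b : 'I_p -> R) j t :
  l1 (upd b j t) <= l1 b + `|t|.
Proof.
rewrite /l1 /upd (bigD1 j) //= [X in _ <= X + _](bigD1 j) //= eqxx.
rewrite (eq_bigr (fun k => `|b k|)); last by move=> k /negbTE ->; rewrite addr0.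
have := ler_normD (b j) t; lra.
Qed.

Lemma linf_ge (R : realType) (p : nat) (b : 'I_p -> R) j : `|b j| <= linf b.
Proof. by rewrite /linf (bigD1 j) //= le_max lexx. Qed.

Lemma linf_le (R : realType) (p : nat) (b : 'I_p -> R) (X : R) :
  0 <= X -> (forall j, `|b j| <= X) -> linf b <= X.
Proof.
move=> h0 h; rewrite /linf; apply: (big_ind (fun v => v <= X)) => //.
by move=> u v hu hv; rewrite ge_max hu hv.
Qed.

Lemma linf_ge0 (R : realType) (p : nat) (b : 'I_p -> R) : 0 <= linf b.
Proof.
rewrite /linf; apply: (big_ind (fun v => 0 <= v)) => //.
by move=> u v hu hv; rewrite le_max hu.
Qed.

Lemma quad_bound (R : realType) (E K : R) :
  (forall t, 0 <= t ^+ 2 - 2 * t * E + K) -> E ^+ 2 <= K.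
Proof. move=> h; have := h E; nra. Qed.

Lemma cs_sq (R : realType) (n : nat) (a b : 'I_n -> R) :
  En (fun i => a i * b i) ^+ 2 <=
  En (fun i => a i ^+ 2) * En (fun i => b i ^+ 2).
Proof.
set E := En _; set P := En _; set Q := En (fun i => b i ^+ 2).
have hq : forall t, 0 <= P - 2 * t * E + t ^+ 2 * Q.
  move=> t; rewrite -En_quad; apply: En_ge0 => i; exact: sqr_ge0.
have Q0 : 0 <= Q by apply: En_ge0 => i; exact: sqr_ge0.
have P0 : 0 <= P by apply: En_ge0 => i; exact: sqr_ge0.
have [Qp|] := ltrP 0 Q.
  have := hq (E / Q).
  have -> : P - 2 * (E / Q) * E + (E / Q) ^+ 2 * Q = (P * Q - E ^+ 2) / Q.
    by field; rewrite gt_eqF.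
  by rewrite pmulr_lge0 ?invr_gt0 // subr_ge0.
move=> Qle; have Qz : Q = 0 by apply/eqP; rewrite eq_le Qle Q0.
rewrite Qz mulr0.
have [Ez|Enz] := eqVneq E 0; first by rewrite Ez expr0n.
have := hq ((P + 1) / (2 * E)); rewrite Qz mulr0 addr0.
have -> : P - 2 * ((P + 1) / (2 * E)) * E = -1.
  by field; rewrite Enz.
lra.
Qed.

Lemma cauchy_schwarz (R : realType) (n : nat) (a b : 'I_n -> R) :
  En (fun i => a i * b i) <=
  Num.sqrt (En (fun i => a i ^+ 2)) * Num.sqrt (En (fun i => b i ^+ 2)).
Proof.
have P0 : 0 <= En (fun i => a i ^+ 2) by apply: En_ge0 => i; exact: sqr_ge0.
rewrite -sqrtrM //; apply: le_trans (ler_norm _) _.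
rewrite -sqrtr_sqr; apply: ler_wsqrtr; exact: cs_sq.
Qed.
Arguments linf_ge {R p}. Arguments linf_le {R p}. Arguments linf_ge0 {R p}.
Arguments En_ext {R n}. Arguments En_le {R n}. Arguments En_ge0 {R n}.
Arguments cauchy_schwarz {R n}. Arguments l1_upd {R p}. Arguments xdot_upd {R n p}.

Lemma l1_ge0 (R : realType) (p : nat) (b : 'I_p -> R) : 0 <= l1 b.
Proof. by rewrite /l1; apply: sumr_ge0 => j _. Qed.

Lemma l1_ge (R : realType) (p : nat) (b : 'I_p -> R) j : `|b j| <= l1 b.
Proof.
rewrite /l1 (bigD1 j) //= lerDl; by apply: sumr_ge0 => k _.
Qed.

Lemma l1_split (R : realType) (p : nat) (T : {set 'I_p}) (d : 'I_p -> R) :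
  l1 d = l1 (restr T d) + l1 (restr (~: T) d).
Proof.
rewrite /l1 -big_split /=; apply: eq_bigr => j _; rewrite /restr inE.
by case: (j \in T) => /=; rewrite normr0 ?addr0 ?add0r.
Qed.

Lemma l1_restr_le (R : realType) (p : nat) (T : {set 'I_p}) (d : 'I_p -> R) Z :
  (forall j, j \in T -> `|d j| <= Z) -> l1 (restr T d) <= #|T|%:R * Z.
Proof.
move=> h; rewrite /l1 /restr.
apply: le_trans (_ : \sum_(j < p) (if j \in T then Z else 0) <= _).
  apply: ler_sum => j _; case: ifP => hj; first exact: h.
  by rewrite normr0.
by rewrite -big_mkcond /= sumr_const mulr_natl.
Qed.

Lemma arith3 (R : realType) (a c U sR P Y Sinf LT LC : R) :
  0 < a -> 1 < c -> 1 <= sR -> 0 <= P -> 0 <= Sinf -> c * Sinf <= a ->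
  0 <= LT -> 0 <= LC ->
  a * ((c - 1) * LC) <= a * ((c + 1) * LT) + c * P ->
  LT <= sR * Y ->
  Y = Sinf / 2 + a / 2 + (LT + LC) * (1 / (U * sR)) ->
  5 * ((c + 1) / (c - 1)) < U ->
  Y <= a * ((U + (c + 1) / (c - 1)) / (U - 5 * ((c + 1) / (c - 1))))
       + 4 * ((c + 1) / (c - 1)) / U * a^-1 * (P / sR).
Proof.
move=> a0 c1 s1 P0 S0 cS LT0 LC0 hLC hLT hY hU.
set q := (c + 1) / (c - 1) in hU *.
have k0 : 0 < c - 1 by lra.
have hq : q * (c - 1) = c + 1 by rewrite /q; field; rewrite gt_eqF.
have q1 : 1 < q.
  by rewrite /q ltr_pdivlMr // mul1r; lra.
have U0 : 0 < U by lra.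
have sR0 : 0 < sR by lra.
have Us0 : 0 < U * sR by rewrite mulr_gt0.
have hY' : Y * (U * sR) = (Sinf / 2 + a / 2) * (U * sR) + (LT + LC).
  have Un : U != 0 by rewrite gt_eqF.
  have sn : sR != 0 by rewrite gt_eqF.
  by rewrite hY; field; repeat (apply/andP; split); assumption.
have hLC' : a * (c - 1) * LC <= a * (c - 1) * (q * LT) + c * P.
  have -> : a * (c - 1) * (q * LT) = a * ((c + 1) * LT).
    by rewrite -hq; ring.
  by rewrite -mulrA.
have ak0 : 0 < a * (c - 1) by rewrite mulr_gt0.
have cS' : c * (Sinf / 2 + a / 2) <= a * (c + 1) / 2 by lra.
have key : a * (c - 1) * (Y * (U * sR)) <=
   a * (c - 1) * ((Sinf / 2 + a / 2) * (U * sR)) + a * (c - 1) * ((1 + q) * (sR * Y)) + c * P.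
  rewrite hY' mulrDr.
  have : a * (c - 1) * LT <= a * (c - 1) * (sR * Y) by apply: ler_wpM2l; [exact: ltW|].
  nra.
have Xq : 0 < U - 1 - q by lra.
have U5 : 0 < U - 5 * q by lra.
set T1 := a * ((U + q) / (U - 5 * q)).
set T2 := 4 * q / U * a^-1 * (P / sR).
have HT1 : a * U <= T1 * (U - 1 - q).
  rewrite /T1 -mulrA; apply: ler_wpM2l; first exact: ltW.
  rewrite mulrAC ler_pdivlMr //; nra.
have HT2 : c * P <= T2 * (a * (c - 1) * sR * (U - 1 - q)).
  have -> : T2 * (a * (c - 1) * sR * (U - 1 - q)) = 4 * (q * (c - 1)) * P * (U - 1 - q) / U.
    have an : a != 0 by rewrite gt_eqF.
    have Un : U != 0 by rewrite gt_eqF.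
    have sn : sR != 0 by rewrite gt_eqF.
    by rewrite /T2; field; repeat (apply/andP; split); assumption.
  rewrite hq ler_pdivlMr //.
  have : c * U <= 4 * (c + 1) * (U - 1 - q) by nra.
  nra.
have HS : Sinf / 2 + a / 2 <= a.
  have : Sinf <= a by nra.
  lra.
set K := a * (c - 1) * sR.
have K0 : 0 < K by rewrite /K mulr_gt0.
have e1 : K * (U - 1 - q) * Y = a * (c - 1) * (Y * (U * sR)) - a * (c - 1) * ((1 + q) * (sR * Y)).
  by rewrite /K; ring.
have e2 : a * (c - 1) * ((Sinf / 2 + a / 2) * (U * sR)) = (Sinf / 2 + a / 2) * (K * U).
  by rewrite /K; ring.
have h3 : (Sinf / 2 + a / 2) * (K * U) <= a * (K * U).
  by apply: ler_wpM2r => //; rewrite mulr_ge0 // ltW.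
have h4 : K * (a * U) <= K * (T1 * (U - 1 - q)) by apply: ler_wpM2l => //; exact: ltW.
have e3 : T2 * (a * (c - 1) * sR * (U - 1 - q)) = T2 * (K * (U - 1 - q)) by rewrite /K; ring.
have main : (K * (U - 1 - q)) * Y <= (K * (U - 1 - q)) * (T1 + T2).
  rewrite e1; rewrite e2 in key; rewrite e3 in HT2.
  have e4 : a * (K * U) = K * (a * U) by ring.
  rewrite e4 in h3.
  have e5 : K * (U - 1 - q) * (T1 + T2) = K * (T1 * (U - 1 - q)) + T2 * (K * (U - 1 - q)) by ring.
  rewrite e5; lra.
by move: main; rewrite ler_pM2l // mulr_gt0.
Qed.

Lemma EnB (R : realType) (n : nat) (a b : 'I_n -> R) :
  En (fun i => a i - b i) = En a - En b.
Proof.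
rewrite (@En_ext _ _ _ (fun i => a i + (-1) * b i)); last by move=> i; ring.
by rewrite EnD EnZ; ring.
Qed.

Lemma sq_norm_le (R : realType) (x y : R) : 0 <= y -> x ^+ 2 <= y ^+ 2 -> `|x| <= y.
Proof.
move=> y0 h; have e : `|x| ^+ 2 = x ^+ 2 by rewrite -normrX ger0_norm // sqr_ge0.
have := normr_ge0 x; nra.
Qed.

Arguments l1_ge0 {R p}. Arguments l1_ge {R p}. Arguments l1_restr_le {R p}.

Theorem lemma3 (R : realType) (n p : nat) (x : 'I_n -> 'I_p -> R)
  (f eps : 'I_n -> R) (sigma K : R) (beta0 betah : 'I_p -> R) (lambda c : R) :
  (0 < n)%N -> 0 < sigma ->
  (exists j : 'I_p, forall i, x i j = 1) ->
  (forall j : 'I_p, En (fun i => x i j ^+ 2) = 1) ->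
  (forall b : 'I_p -> R,
     En (fun i => (f i - xdot x i beta0) ^+ 2) + sigma ^+ 2 * (l0 beta0)%:R / n%:R
     <= En (fun i => (f i - xdot x i b) ^+ 2) + sigma ^+ 2 * (l0 b)%:R / n%:R) ->
  0 < K ->
  Num.sqrt (En (fun i => (f i - xdot x i beta0) ^+ 2))
    <= K * sigma * Num.sqrt ((l0 beta0)%:R / n%:R) ->
  0 < lambda ->
  (forall b : 'I_p -> R,
     En (fun i => (f i + eps i - xdot x i betah) ^+ 2) + lambda / n%:R * l1 betah
     <= En (fun i => (f i + eps i - xdot x i b) ^+ 2) + lambda / n%:R * l1 b) ->
  1 < c ->
  let T := supp beta0 in
  let s := l0 beta0 in
  let cs := Num.sqrt (En (fun i => (f i - xdot x i beta0) ^+ 2)) in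
  let Th := supp betah in
  let zeta := linf (fun j => betah j - beta0 j) in
  let mh := #|Th :\: T| in
  let cbar := (c + 1) / (c - 1) in
  let Sinf := linf (fun j => 2 * En (fun i => x i j * eps i)) in
  (forall t : R, zeta <= t ->
     (forall j, j \in T -> zeta + t < `|beta0 j|) ->
     T \subset Th /\ T = [set j | t < `|betah j|]) /\
  (c * n%:R * Sinf <= lambda -> (0 < s)%N ->
     0 < kappaC x T cbar -> 0 < kappa_sp x T mh ->
     zeta <= (1 + c^-1) * (lambda * Num.sqrt s%:R)
               / (n%:R * kappaC x T cbar * kappa_sp x T mh)
             + 2 * cs / kappa_sp x T mh) /\
  (forall U : R, c * n%:R * Sinf <= lambda -> (0 < s)%N -> 5 * cbar < U ->
     (forall j k : 'I_p, (j < k)%N ->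
        `|En (fun i => x i j * x i k)| <= 1 / (U * s%:R)) ->
     zeta <= lambda / n%:R * ((U + cbar) / (U - 5 * cbar))
             + Num.min (sigma / Num.sqrt n%:R) cs
             + 6 * cbar / (U - 5 * cbar) * (cs / Num.sqrt s%:R)
             + 4 * cbar / U * (n%:R / lambda) * (cs ^+ 2 / s%:R)).
Proof.
move=> n0 sig0 [j0 hconst] hnorm horacle K0 hK lam0 hlasso c1
  T s cs Th zeta mh cbar Sinf.
pose d := fun j => betah j - beta0 j.
have zetaE : zeta = linf d by [].
have inT : forall j, (j \in T) = (beta0 j != 0) by move=> j; rewrite inE.
have inTh : forall j, (j \in Th) = (betah j != 0) by move=> j; rewrite inE.
have out0 : forall j, j \notin T -> beta0 j = 0.
  by move=> j; rewrite inT negbK => /eqP.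
have dle : forall j, `|d j| <= zeta by move=> j; rewrite zetaE; exact: linf_ge.
have zeta0 : 0 <= zeta by exact: linf_ge0.
split.
  move=> t zt hT.
  have key : forall j, (j \in T) = (t < `|betah j|).
    move=> j; case: (boolP (j \in T)) => hj.
      have := hT j hj; have := dle j; rewrite /d.
      have := lerB_dist (beta0 j) (betah j); rewrite distrC.
      move=> h1 h2 h3; apply/esym; lra.
    have := dle j; rewrite /d out0 // subr0 => h; apply/esym/negbTE.
    by rewrite -leNgt; apply: le_trans h zt.
  split.
    apply/fintype.subsetP => j hj; rewrite inTh; apply/negP => /eqP hb.
    by move: hj; rewrite key hb normr0 ltNge (le_trans zeta0 zt).
  by apply/setP => j; rewrite key inE.

pose r := fun i => f i - xdot x i beta0.
pose u := fun i => xdot x i d.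
set a := lambda / n%:R in hlasso *.
have nR : 0 < n%:R :> R by rewrite ltr0n.
have a0 : 0 < a by rewrite /a divr_gt0.
have hu : forall i, xdot x i betah = xdot x i beta0 + u i.
  by move=> i; rewrite /u /d xdotB; ring.
pose P := En (fun i => r i ^+ 2).
have P0 : 0 <= P by apply: En_ge0 => i; exact: sqr_ge0.
have csE : cs = Num.sqrt P by [].
have cs2 : cs ^+ 2 = P by rewrite csE sqr_sqrtr.
have cs0 : 0 <= cs by rewrite csE sqrtr_ge0.
pose D2 := En (fun i => u i ^+ 2).
have D20 : 0 <= D2 by apply: En_ge0 => i; exact: sqr_ge0.
pose Eru := En (fun i => r i * u i).
pose Eeu := En (fun i => eps i * u i).
pose LT := l1 (restr T d).
pose LC := l1 (restr (~: T) d).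
have LT0 : 0 <= LT by exact: l1_ge0.
have LC0 : 0 <= LC by exact: l1_ge0.
have hl1 : l1 d = LT + LC by exact: l1_split.
have BI0 : D2 <= 2 * Eru + 2 * Eeu + a * (l1 beta0 - l1 betah).
  have h := hlasso beta0.
  have e1 : En (fun i => (f i + eps i - xdot x i betah) ^+ 2) =
            En (fun i => ((r i + eps i) - 1 * u i) ^+ 2).
    by apply: En_ext => i; rewrite hu /r; ring.
  have e2 : En (fun i => (f i + eps i - xdot x i beta0) ^+ 2) =
            En (fun i => (r i + eps i) ^+ 2).
    by apply: En_ext => i; rewrite /r; ring.
  have e3 : En (fun i => (r i + eps i) * u i) = Eru + Eeu.
    by rewrite -EnD; apply: En_ext => i; ring.
  rewrite e1 e2 En_quad e3 expr1n mul1r -/D2 in h.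
  lra.
have Eeu_le : 2 * Eeu <= Sinf * l1 d.
  have e4 : Eeu = \sum_(j < p) d j * En (fun i => x i j * eps i).
    rewrite (eq_bigr (fun j => En (fun i => d j * (x i j * eps i))));
      last by move=> j _; rewrite EnZ.
    rewrite -En_sum; apply: En_ext => i.
    by rewrite /u /xdot mulr_sumr; apply: eq_bigr => j _; ring.
  rewrite e4 mulr_sumr /l1 mulr_sumr; apply: ler_sum => j _.
  have := @linf_ge _ _ (fun j => 2 * En (fun i => x i j * eps i)) j; rewrite -/Sinf.
  set v := En _ => h.
  rewrite mulrCA; apply: le_trans (ler_norm _) _.
  by rewrite normrM mulrC; apply: ler_wpM2r.
have l1diff : l1 beta0 - l1 betah <= LT - LC.
  rewrite /LT /LC /l1 -!sumrB; apply: ler_sum => j _.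
  rewrite /restr finset.in_setC /d; case: (boolP (j \in T)) => hj /=.
    rewrite normr0 subr0; have := lerB_dist (beta0 j) (betah j).
    by rewrite distrC.
  by rewrite out0 // subr0 normr0 !sub0r.

have Sinf0 : 0 <= Sinf by exact: linf_ge0.
have cSa : c * n%:R * Sinf <= lambda -> c * Sinf <= a.
  by move=> h; rewrite /a ler_pdivlMr // mulrAC.
have BIc : c * n%:R * Sinf <= lambda ->
    c * (D2 - 2 * Eru) <= a * ((c + 1) * LT - (c - 1) * LC).
  move=> /cSa cS.
  have h1 : a * (l1 beta0 - l1 betah) <= a * (LT - LC).
    by apply: ler_wpM2l => //; exact: ltW.
  have h2 : (c * Sinf) * (LT + LC) <= a * (LT + LC).
    by apply: ler_wpM2r => //; lra.
  rewrite hl1 in Eeu_le.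
  have h3 : D2 - 2 * Eru <= Sinf * (LT + LC) + a * (LT - LC) by lra.
  have h4 := ler_wpM2l (ltW (lt_trans ltr01 c1)) h3.
  nra.
have c0 : 0 < c by lra.
have dcase : (forall j, d j = 0) \/ (exists j, d j != 0).
  case: (boolP [exists j, d j != 0]) => [/existsP h|h]; first by right.
  left; move=> j; apply/eqP; apply: contraNT h => hj.
  by apply/existsP; exists j.
split.
  move=> hlam s0 kC0 kS0.
  set kC := kappaC x T cbar in kC0 *.
  set kS := kappa_sp x T mh in kS0 *.
  have RHS0 : 0 <= (1 + c^-1) * (lambda * Num.sqrt s%:R) / (n%:R * kC * kS)
             + 2 * cs / kS.
    have hk : 0 < n%:R * kC * kS by rewrite !mulr_gt0.
    have h1 : 0 <= 1 + c^-1 by rewrite addr_ge0 // invr_ge0 ltW.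
    apply: addr_ge0.
      apply: divr_ge0 (ltW hk).
      exact: mulr_ge0 h1 (mulr_ge0 (ltW lam0) (sqrtr_ge0 _)).
    by apply: divr_ge0 (ltW kS0); apply: mulr_ge0.
  case: dcase => [dz|[j1 hj1]].
    apply: le_trans RHS0; rewrite zetaE; apply: linf_le => // j.
    by rewrite dz normr0.
  pose D : R := Num.sqrt D2.
  have D0 : 0 <= D by exact: sqrtr_ge0.
  have DD : D ^+ 2 = D2 by rewrite sqr_sqrtr.
  have CS : Eru <= cs * D by exact: (cauchy_schwarz r u).
  have cinv0 : 0 <= 1 + c^-1 by rewrite addr_ge0 // invr_ge0 ltW.
  pose M : R := 2 * cs + (1 + c^-1) * a * Num.sqrt s%:R / kC.
  have M2 : 2 * cs <= M.
    rewrite /M lerDl; apply: divr_ge0 (ltW kC0).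
    apply: mulr_ge0; last exact: sqrtr_ge0.
    by apply: mulr_ge0 => //; exact: ltW.
  have DM : D2 <= D * M.
    have [cone|ncone] := leP LC (cbar * LT).
      have [jT [hjT hdjT]] : exists j, j \in T /\ d j != 0.
        case: (boolP [exists j, (j \in T) && (d j != 0)]) =>
          [/existsP [j /andP [h1 h2]]|h]; first by exists j.
        exfalso.
        have LTz : LT <= 0.
          apply: le_trans (@l1_restr_le _ _ T d 0 _) _; last by rewrite mulr0.
          move=> j hj; case: (eqVneq (d j) 0) => [->|hne]; first by rewrite normr0.
          by exfalso; move/negP: h; apply; apply/existsP; exists j; rewrite hj hne.
        have cb0 : 0 <= cbar by rewrite /cbar divr_ge0 //; lra.
        have LCz : LC <= 0.
          apply: le_trans cone _; rewrite -(mulr0 cbar); exact: ler_wpM2l.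
        have := @l1_ge _ _ d j1; rewrite hl1 => hh.
        have : `|d j1| <= 0 by lra.
        by rewrite normr_le0 (negbTE hj1).
      have LTp : 0 < LT.
        apply: lt_le_trans (@l1_ge _ _ (restr T d) jT); rewrite /restr hjT.
        by rewrite normr_gt0.
      have kCle : kC <= Num.sqrt s%:R * D / LT.
        rewrite /kC /kappaC; apply: (ge_inf _).
          exists 0 => y [d' [_ _ ->]]; apply: divr_ge0 (l1_ge0 _).
          by apply: mulr_ge0; apply: sqrtr_ge0.
        by exists d; split => //; exists jT.
      have LTle : LT <= Num.sqrt s%:R * D / kC.
        rewrite ler_pdivlMr // mulrC -ler_pdivlMr //.
      have h : c * (D2 - 2 * Eru) <= a * ((c + 1) * LT).
        have := BIc hlam.
        have : 0 <= a * ((c - 1) * LC).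
          by apply: mulr_ge0; [exact: ltW | apply: mulr_ge0 => //; lra].
        nra.
      have h' : D2 - 2 * Eru <= (1 + c^-1) * a * LT.
        have -> : (1 + c^-1) * a * LT = c^-1 * (a * ((c + 1) * LT)).
          by field; rewrite gt_eqF.
        by rewrite ler_pdivlMl.
      have h'' : (1 + c^-1) * a * LT <= (1 + c^-1) * a * (Num.sqrt s%:R * D / kC).
        by apply: ler_wpM2l => //; rewrite mulr_ge0 // ltW.
      have e : D * M = 2 * (cs * D) + (1 + c^-1) * a * (Num.sqrt s%:R * D / kC).
        have kCn : kC != 0 by rewrite gt_eqF.
        have cn : c != 0 by rewrite gt_eqF.
        by rewrite /M; field; repeat (apply/andP; split); assumption.
      rewrite e; lra.
    have e : (c - 1) * (cbar * LT) = (c + 1) * LT.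
      by rewrite /cbar; field; rewrite subr_eq0 gt_eqF.
    have h1 : (c - 1) * (cbar * LT) <= (c - 1) * LC.
      by apply: ler_wpM2l; [lra| exact: ltW].
    have h2 : a * ((c + 1) * LT - (c - 1) * LC) <= 0.
      by rewrite pmulr_rle0 //; lra.
    have := BIc hlam => h3.
    have h4 : D2 - 2 * Eru <= 0 by nra.
    have h5 : D * (2 * cs) <= D * M by exact: ler_wpM2l.
    nra.
  have M0 : 0 <= M by lra.
  have DleM : D <= M by nra.
  pose B2 := \sum_(j < p) d j ^+ 2.
  have Bge : forall j, d j ^+ 2 <= B2.
    move=> j; rewrite /B2 (bigD1 j) //= lerDl; apply: sumr_ge0 => k _.
    exact: sqr_ge0.
  have B2p : 0 < B2.
    by apply: lt_le_trans (Bge j1); rewrite exprn_even_gt0 //= hj1.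
  have l2E : l2 d ^+ 2 = B2 by rewrite /l2 sqr_sqrtr // ltW.
  have nE : norm2n x d ^+ 2 = D2 by rewrite /norm2n sqr_sqrtr.
  pose SS := ([set r : R | exists d : 'I_p -> R,
         [/\ (exists j, d j != 0),
             (#|([set j in ~: T | d j != 0%R])%SET| <= mh)%N &
             r = norm2n x d ^+ 2 / l2 d ^+ 2]])%classic.
  pose infS := inf SS.
  have kSE : kS = Num.sqrt infS by [].
  have infle : infS <= D2 / B2.
    rewrite -l2E -nE; apply: (ge_inf _).
      exists 0 => y [d' [_ _ ->]]; apply: divr_ge0; exact: sqr_ge0.
    exists d; split => //; first by exists j1.
    apply: subset_leq_card; apply/fintype.subsetP => j; rewrite !inE.
    move=> /andP[]; rewrite negbK => /eqP h1 h2; rewrite h1 eqxx /=.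
    by move: h2; rewrite /d h1 subr0.
  have infS0 : 0 < infS by rewrite -sqrtr_gt0 -kSE.
  have kS2 : kS ^+ 2 = infS by rewrite kSE sqr_sqrtr // ltW.
  have zs : zeta <= Num.sqrt B2.
    rewrite zetaE; apply: linf_le; first exact: sqrtr_ge0.
    by move=> j; rewrite -sqrtr_sqr; apply: ler_wsqrtr.
  have zeta2 : zeta ^+ 2 <= B2.
    have := sqr_sqrtr (ltW B2p); have := sqrtr_ge0 B2; nra.
  have iB : infS * B2 <= D2 by rewrite -ler_pdivlMr.
  have zk2 : (zeta * kS) ^+ 2 <= M ^+ 2.
    rewrite exprMn kS2.
    have : zeta ^+ 2 * infS <= B2 * infS by apply: ler_wpM2r => //; exact: ltW.
    nra.
  have zk0 : 0 <= zeta * kS by rewrite mulr_ge0 // ltW.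
  have zk : zeta * kS <= M by nra.
  have -> : (1 + c^-1) * (lambda * Num.sqrt s%:R) / (n%:R * kC * kS) + 2 * cs / kS
            = M / kS.
    by rewrite /M /a; field; rewrite !gt_eqF.
  by rewrite ler_pdivlMr.
move=> U hlam s0 hU hcoh.
have cS := cSa hlam.
have BI := BIc hlam.
have PD : - P <= D2 - 2 * Eru.
  have := En_ge0 (fun i => (r i - 1 * u i) ^+ 2) (fun i => sqr_ge0 _).
  rewrite En_quad expr1n mul1r -/P -/Eru -/D2; lra.
have hLC : a * ((c - 1) * LC) <= a * ((c + 1) * LT) + c * P.
  have := ler_wpM2l (ltW c0) PD; nra.
have sR1 : 1 <= s%:R :> R by rewrite ler1n.
have sR0 : 0 < s%:R :> R by lra.
have U0 : 0 < U.
  have : 0 <= cbar by rewrite /cbar divr_ge0 //; lra.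
  lra.
pose mu : R := 1 / (U * s%:R).
have mu0 : 0 <= mu by rewrite /mu divr_ge0 // mulr_ge0 // ltW.
(* KKT *)
pose w := fun i => f i + eps i - xdot x i betah.
pose Hj := fun j => En (fun i => w i * x i j).
have KKT : forall j, `|Hj j| <= a / 2.
  move=> j.
  have key : forall t, 0 <= t ^+ 2 - 2 * t * Hj j + a * `|t|.
    move=> t; have h := hlasso (upd betah j t).
    have e : En (fun i => (f i + eps i - xdot x i (upd betah j t)) ^+ 2) =
             En (fun i => (w i - t * x i j) ^+ 2).
      by apply: En_ext => i; rewrite xdot_upd /w; ring.
    rewrite e En_quad hnorm mulr1 in h.
    have := ler_wpM2l (ltW a0) (l1_upd betah j t).
    rewrite /Hj; lra.
  rewrite ler_norml; apply/andP; split.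
    rewrite leNgt; apply/negP => hlt; have := key (Hj j + a / 2).
    rewrite ler0_norm; [nra|lra].
  rewrite leNgt; apply/negP => hlt; have := key (Hj j - a / 2).
  rewrite ger0_norm; [nra|lra].
pose G := fun j k => En (fun i => x i j * x i k).
have Gs : forall j k, j != k -> `|G j k| <= mu.
  move=> j k hjk; case: (ltngtP j k) => h; first exact: hcoh.
    rewrite /G (En_ext _ (fun i => x i k * x i j)); first exact: hcoh.
    by move=> i; rewrite mulrC.
  by exfalso; move/eqP: hjk; apply; apply: val_inj.
have decomp : forall j, En (fun i => u i * x i j) =
    d j + \sum_(k < p | k != j) G j k * d k.
  move=> j.
  have -> : En (fun i => u i * x i j) = \sum_(k < p) G j k * d k.
    rewrite (eq_bigr (fun k => En (fun i => d k * (x i j * x i k))));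
      last by move=> k _; rewrite EnZ mulrC.
    rewrite -En_sum; apply: En_ext => i; rewrite /u /xdot mulr_suml.
    by apply: eq_bigr => k _; ring.
  rewrite (bigD1 j) //=; congr (_ + _).
  rewrite /G (En_ext _ (fun i => x i j ^+ 2)); first by rewrite hnorm mul1r.
  by move=> i; rewrite expr2.
have offd : forall j, `|\sum_(k < p | k != j) G j k * d k| <= mu * l1 d.
  move=> j; apply: le_trans (ler_norm_sum _ _ _) _.
  apply: le_trans (_ : _ <= \sum_(k < p | k != j) mu * `|d k|) _.
    apply: ler_sum => k hk; rewrite normrM; apply: ler_wpM2r => //.
    by apply: Gs; rewrite eq_sym.
  rewrite -mulr_sumr; apply: ler_wpM2l => //.
  rewrite /l1 [X in _ <= X](bigD1 j) //= lerDr //.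
pose Er := fun j => En (fun i => r i * x i j).
have horq : forall j t, P + sigma ^+ 2 * s%:R / n%:R <=
    P - 2 * t * Er j + t ^+ 2 + sigma ^+ 2 * (l0 (upd beta0 j t))%:R / n%:R.
  move=> j t; have h := horacle (upd beta0 j t).
  have e : En (fun i => (f i - xdot x i (upd beta0 j t)) ^+ 2) =
           En (fun i => (r i - t * x i j) ^+ 2).
    by apply: En_ext => i; rewrite xdot_upd /r; ring.
  by rewrite e En_quad hnorm mulr1 in h.
have l0in : forall j t, j \in T -> beta0 j + t != 0 -> l0 (upd beta0 j t) = s.
  move=> j t hj ht; rewrite /s /l0.
  suff -> : supp (upd beta0 j t) = supp beta0 by [].
  apply/finset.setP => k.
  rewrite !inE /upd; case: (eqVneq k j) => [->|hk] /=.
    by rewrite ht -inT hj.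
  by rewrite addr0.
have l0out : forall j t, j \notin T -> t != 0 -> l0 (upd beta0 j t) = s.+1.
  move=> j t hj ht; rewrite /l0.
  have -> : supp (upd beta0 j t) = j |: T.
    apply/finset.setP => k; rewrite !inE /upd; case: (eqVneq k j) => [->|hk] /=.
      by rewrite out0 // add0r ht.
    by rewrite addr0.
  by rewrite cardsU1 hj add1n.
have Er_in : forall j, j \in T -> Er j = 0.
  move=> j hj; case: (eqVneq (Er j) 0) => // hE; exfalso.
  have E2 : 0 < Er j ^+ 2 by rewrite exprn_even_gt0 //= hE.
  case: (eqVneq (beta0 j + Er j) 0) => hb.
    have ht : beta0 j + Er j / 2 != 0.
      apply/negP => /eqP h; move/eqP: hE; apply; move/eqP: hb; lra.
    have := horq j (Er j / 2); rewrite l0in //; nra.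
  have := horq j (Er j); rewrite l0in //; nra.
have Er_out : forall j, j \notin T -> Er j ^+ 2 <= sigma ^+ 2 / n%:R.
  move=> j hj; case: (eqVneq (Er j) 0) => [->|hE].
    by rewrite expr0n /= divr_ge0 // ?sqr_ge0 // ler0n.
  have es : (s.+1)%:R = s%:R + 1 :> R by rewrite -addn1 natrD.
  have := horq j (Er j); rewrite l0out // es.
  have e : sigma ^+ 2 * (s%:R + 1) / n%:R =
           sigma ^+ 2 * s%:R / n%:R + sigma ^+ 2 / n%:R by ring.
  rewrite e; nra.
have Er_P : forall j, Er j ^+ 2 <= P.
  move=> j; apply: quad_bound => t.
  have := En_ge0 (fun i => (r i - t * x i j) ^+ 2) (fun i => sqr_ge0 _).
  rewrite En_quad hnorm mulr1 -/P /Er /=; lra.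
pose m0 := Num.min (sigma / Num.sqrt n%:R) cs.
have m00 : 0 <= m0.
  by rewrite /m0 le_min cs0 andbT divr_ge0 ?sqrtr_ge0 // ltW.
have rho : forall j, `|Er j| <= m0.
  move=> j; case: (boolP (j \in T)) => hj; first by rewrite Er_in // normr0.
  rewrite /m0 le_min; apply/andP; split.
    apply: sq_norm_le; first by rewrite divr_ge0 ?sqrtr_ge0 // ltW.
    have sq : (sigma / Num.sqrt n%:R) ^+ 2 = sigma ^+ 2 / n%:R.
      rewrite expr_div_n; congr (_ / _); rewrite sqr_sqrtr //; exact: ler0n.
    by rewrite sq; exact: Er_out.
  by apply: sq_norm_le => //; rewrite cs2; exact: Er_P.
pose Y := Sinf / 2 + a / 2 + (LT + LC) * (1 / (U * s%:R)).
have dbound : forall j, `|d j| <= `|Er j| + Y.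
  move=> j.
  pose g := En (fun i => u i * x i j).
  pose Ee := En (fun i => x i j * eps i).
  have hH : Hj j = Er j + Ee - g.
    rewrite /Hj /Er /Ee /g -EnD -EnB; apply: En_ext => i.
    by rewrite /w hu /r; ring.
  have hEe : `|Ee| <= Sinf / 2.
    have := @linf_ge _ _ (fun j => 2 * En (fun i => x i j * eps i)) j.
    rewrite -/Sinf normrM ger0_norm // -/Ee; lra.
  have hd : d j = g - \sum_(k < p | k != j) G j k * d k.
    by rewrite /g decomp; ring.
  have t1 := ler_normD g (- \sum_(k < p | k != j) G j k * d k).
  rewrite normrN -hd in t1.
  have hg : g = Er j + Ee - Hj j by rewrite hH; ring.
  have t2 := ler_normD (Er j + Ee) (- Hj j).
  rewrite normrN -hg in t2.
  have t3 := ler_normD (Er j) Ee.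
  have := offd j; rewrite hl1 /mu => t4.
  have := KKT j => t5.
  rewrite /Y; lra.
have Y0 : 0 <= Y.
  rewrite /Y; apply: addr_ge0; first by lra.
  by rewrite mulr_ge0 ?addr_ge0 // divr_ge0 // mulr_ge0 // ltW.
have ZT : linf (restr T d) <= Y.
  apply: linf_le => // j; rewrite /restr; case: ifP => hj; last by rewrite normr0.
  by have := dbound j; rewrite Er_in // normr0 add0r.
have LTle : LT <= s%:R * Y.
  apply: le_trans (@l1_restr_le _ _ T d (linf (restr T d)) _) _.
    by move=> j hj; have := @linf_ge _ _ (restr T d) j; rewrite /restr hj.
  by apply: ler_wpM2l => //; rewrite ler0n.
have zY : zeta <= m0 + Y.
  rewrite zetaE; apply: linf_le; first exact: addr_ge0.
  by move=> j; have := dbound j; have := rho j; lra.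
have hy : Y <= a * ((U + cbar) / (U - 5 * cbar)) + 4 * cbar / U * a^-1 * (P / s%:R).
  exact: (@arith3 _ a c U s%:R P Y Sinf LT LC a0 c1 sR1 P0 Sinf0 cS LT0 LC0 hLC LTle erefl hU).
have e : n%:R / lambda = a^-1 by rewrite /a invf_div.
rewrite e cs2.
have : 0 <= 6 * cbar / (U - 5 * cbar) * (cs / Num.sqrt s%:R).
  apply: mulr_ge0; last by rewrite divr_ge0 ?sqrtr_ge0.
  apply: divr_ge0; last by lra.
  by rewrite mulr_ge0 // /cbar divr_ge0 //; lra.
rewrite -/m0; lra.
Qed.
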